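(* Let $\mathcal S=((x_n,r_n))_{n\ge1}$ be a system satisfying $\mathcal C_1$ with sequence $(N_j)$ and associated function $\psi$, let $((y_n,\rho_n))_{n\ge1}$ be its irreducible subsystem, and fix $\varphi\in\Phi$ (which determines $\gamma$). For $\delta>1$, $U\in\mathcal G_*$ and an integer $j\ge\delta g(U)$, let $$\widetilde{\mathcal Q}(U,j,\delta)=\Big\{V\in\mathcal G_j:\ V\subset U,\ V\cap\Big(\bigcup_{k=g(U)}^{\gamma(j)}\ \bigcup_{p\in\mathcal T_k}B(y_p,\rho_p^\delta)\Big)\ne\emptyset\Big\}.$$ Then there is a constant $C_d$ depending only on $d$ such that for all such $\delta,U,j$, $$\#\widetilde{\mathcal Q}(U,j,\delta)\le C_d\,2^{d(j-g(U))}\Big[2^{-dj\varphi(2^{-j})}+\sum_{g(U)\le k\le j/\delta}2^{-dk(\delta-1-\psi(2^{-k}))}\Big].$$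
   Context: Work in $\mathbb R^d$ with the $L^\infty$ norm; $B(x,r)=\{y:\|y-x\|\le r\}$, $|A|$ is the diameter of $A$. A system is a sequence $\mathcal S=((x_n,r_n))_{n\ge1}$ with $x_n\in[0,1]^d$ and $(r_n)$ non-increasing positive tending to $0$. Irreducible subsystem: $((y_n,\rho_n))_{n\ge1}$ is the subsequence of $((x_n,r_n))$ consisting of the indices $n$ with $n=\min\{p\ge1:x_p=x_n\}$. For $j\ge0$, $\mathcal T_j=\{n:2^{-(j+1)}<\rho_n\le2^{-j}\}$. Condition $\mathcal C_1$: there is a non-decreasing sequence of positive integers $(N_j)_{j\ge0}$ with $\lim_{j}(\log_2N_j)/j=0$ such that for every $j\ge1$, $\mathcal T_j$ decomposes into at most $N_j$ pairwise disjoint subsets $\mathcal T_{j,1},\dots,\mathcal T_{j,N_j}$, each having pairwise disjoint balls $B(y_n,\rho_n)$, $n\in\mathcal T_{j,i}$. $\psi:\mathbb R_+\to\mathbb R_+$ is continuous with $\psi(0)=0$ and $N_j=2^{dj\psi(2^{-j})}$. $\Phi$ is the set of functions $\varphi:\mathbb R_+\to\mathbb R_+$ that are non-decreasing, continuous, with $\varphi(0)=0$, such that $r\mapsto r^{-\varphi(r)}$ is decreasing and tends to $+\infty$ as $r\to0^+$, and for all $\alpha,\beta>0$ the map $r\mapsto r^{\alpha-\beta\varphi(r)}$ is increasing near $0$. $\gamma(j)=\max\{k\in\mathbb N:N_k2^{dk}\le2^{-dj\varphi(2^{-j})}2^{dj}\}$. $\mathcal G_j$ is the set of dyadic subcubes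 of $[0,1]^d$ of side $2^{-j}$, $\mathcal G_*=\bigcup_{j\ge1}\mathcal G_j$, $g(I)=-\log_2|I|$. *)

(* Defs.v *)
From Stdlib Require Import Reals Lra Lia List.
Open Scope R_scope.

(* Points of R^d are functions nat -> R; only coordinates i < d matter. *)
Definition pt := nat -> R.

Definition ball (d : nat) (c : pt) (rad : R) (y : pt) : Prop :=
  forall i, (i < d)%nat -> Rabs (y i - c i) <= rad.

(* A system ((x_n, r_n))_n (indexed from 0). *)
Definition is_system (d : nat) (x : nat -> pt) (r : nat -> R) : Prop :=
  (forall n i, (i < d)%nat -> 0 <= x n i <= 1) /\
  (forall n, 0 < r n) /\
  (forall n, r (S n) <= r n) /\
  Un_cv r 0.

(* n is an index of the irreducible subsystem: x_n is the first occurrence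
   of its value. *)
Definition irred (d : nat) (x : nat -> pt) (n : nat) : Prop :=
  forall p, (p < n)%nat -> ~ (forall i, (i < d)%nat -> x p i = x n i).

(* T_j, expressed with the original indices of the irreducible subsystem. *)
Definition T (d : nat) (x : nat -> pt) (r : nat -> R) (j n : nat) : Prop :=
  irred d x n /\ (/2) ^ (S j) < r n <= (/2) ^ j.

Definition log2 (t : R) : R := ln t / ln 2.

(* Condition C_1 with the given sequence N. The decomposition of T_j into at
   most N_j pairwise disjoint subsets is given by a labelling c j : T_j -> [0, N_j). *)
Definition cond_C1 (d : nat) (x : nat -> pt) (r : nat -> R) (N : nat -> nat) : Prop :=
  (forall j, (1 <= N j)%nat) /\
  (forall j, (N j <= N (S j))%nat) /\
  Un_cv (fun j => log2 (INR (N j)) / INR j) 0 /\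
  exists c : nat -> nat -> nat,
    forall j, (1 <= j)%nat ->
      (forall n, T d x r j n -> (c j n < N j)%nat) /\
      (forall n m, T d x r j n -> T d x r j m -> n <> m -> c j n = c j m ->
         ~ (exists y, ball d (x n) (r n) y /\ ball d (x m) (r m) y)).

Definition cont_nonneg (f : R -> R) : Prop :=
  forall t, 0 <= t -> limit1_in f (fun s => 0 <= s) (f t) t.

Definition psi_assoc (d : nat) (N : nat -> nat) (psi : R -> R) : Prop :=
  (forall t, 0 <= t -> 0 <= psi t) /\ cont_nonneg psi /\ psi 0 = 0 /\
  (forall j, INR (N j) = Rpower 2 (INR d * INR j * psi ((/2) ^ j))).

Definition inPhi (phi : R -> R) : Prop :=
  (forall t, 0 <= t -> 0 <= phi t) /\
  (forall s t, 0 <= s <= t -> phi s <= phi t) /\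
  cont_nonneg phi /\ phi 0 = 0 /\
  (forall s t, 0 < s < t -> Rpower t (- phi t) < Rpower s (- phi s)) /\
  (forall M, exists eps, 0 < eps /\
     forall t, 0 < t < eps -> M < Rpower t (- phi t)) /\
  (forall a b, 0 < a -> 0 < b -> exists eps, 0 < eps /\
     forall s t, 0 < s < t -> t < eps ->
       Rpower s (a - b * phi s) < Rpower t (a - b * phi t)).

Definition gamma_set (d : nat) (N : nat -> nat) (phi : R -> R) (j k : nat) : Prop :=
  INR (N k) * Rpower 2 (INR d * INR k)
    <= Rpower 2 (- (INR d * INR j * phi ((/2) ^ j))) * Rpower 2 (INR d * INR j).

Definition is_gamma (d : nat) (N : nat -> nat) (phi : R -> R) (j g : nat) : Prop :=
  gamma_set d N phi j g /\ forall k, gamma_set d N phi j k -> (k <= g)%nat.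

(* Dyadic cubes: a level l and integer coordinates a (a list of length d with
   entries < 2^l) represent the closed cube prod_i [a_i 2^-l, (a_i+1) 2^-l]. *)
Definition is_dyadic (d l : nat) (a : list nat) : Prop :=
  length a = d /\ forall i, (i < d)%nat -> (nth i a 0%nat < 2 ^ l)%nat.

Definition cube (d l : nat) (a : list nat) (y : pt) : Prop :=
  forall i, (i < d)%nat ->
    INR (nth i a 0%nat) * (/2) ^ l <= y i <= (INR (nth i a 0%nat) + 1) * (/2) ^ l.

(* The set Q~(U, j, delta), U = cube of level gU (so g(U) = gU) with coordinates aU;
   elements are the coordinate lists b of cubes V in G_j. *)
Definition Qtilde (d : nat) (x : nat -> pt) (r : nat -> R) (N : nat -> nat)
    (phi : R -> R) (gU : nat) (aU : list nat) (j : nat) (delta : R) (b : list nat) : Prop :=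
  is_dyadic d j b /\
  (forall y, cube d j b y -> cube d gU aU y) /\
  exists y, cube d j b y /\
    exists k, (exists g, is_gamma d N phi j g /\ (gU <= k <= g)%nat) /\
      exists p, T d x r k p /\ ball d (x p) (Rpower (r p) delta) y.

Definition card_le (A : list nat -> Prop) (M : R) : Prop :=
  forall l : list (list nat), NoDup l -> (forall b, In b l -> A b) -> INR (length l) <= M.

(* Main.v *)
Require Import Defs.
From Stdlib Require Import Reals Lra Lia List ZArith Classical.
Open Scope R_scope.

Definition rsum {X : Type} (f : X -> R) (l : list X) : R :=
  fold_right (fun a s => f a + s) 0 l.

Definition covered (A : list nat -> Prop) (M : R) : Prop :=
  exists L : list (list nat), (forall b, A b -> In b L) /\ INR (length L) <= M.

Lemma covered_card A M : covered A M -> card_le A M.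
Proof.
  intros [L [HL HM]] l Hl Hin.
  apply Rle_trans with (INR (length L)); auto.
  apply le_INR. apply NoDup_incl_length; auto.
  intros b Hb; apply HL, Hin, Hb.
Qed.

Lemma covered_mono (A B : list nat -> Prop) M M' :
  (forall b, A b -> B b) -> M <= M' -> covered B M -> covered A M'.
Proof.
  intros H HM [L [HL HL2]]. exists L; split; auto. lra.
Qed.

Lemma covered_empty (A : list nat -> Prop) M :
  (forall b, ~ A b) -> 0 <= M -> covered A M.
Proof.
  intros H HM. exists nil; split; simpl; [|lra].
  intros b Hb; exfalso; apply (H b Hb).
Qed.

Lemma covered_union {X : Type} (I : list X) (B : X -> list nat -> Prop) (M : X -> R)
  (A : list nat -> Prop) :
  (forall b, A b -> exists i, In i I /\ B i b) ->
  (forall i, In i I -> covered (B i) (M i)) -> covered A (rsum M I).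
Proof.
  revert A. induction I as [|i I IH]; intros A HA HB.
  - apply covered_empty; simpl; [|lra].
    intros b Hb; destruct (HA b Hb) as [i [[] _]].
  - destruct (HB i (or_introl eq_refl)) as [L1 [H1 H1']].
    destruct (IH (fun b => exists i', In i' I /\ B i' b)) as [L2 [H2 H2']].
    + auto.
    + intros i' Hi'; apply HB; right; auto.
    + exists (L1 ++ L2); split.
      * intros b Hb. apply in_or_app. destruct (HA b Hb) as [i' [[<-|Hi'] Hb']].
        -- left; auto.
        -- right; apply H2; exists i'; auto.
      * rewrite length_app, plus_INR. simpl. lra.
Qed.

Lemma rsum_le {X} (f g : X -> R) l : (forall a, In a l -> f a <= g a) -> rsum f l <= rsum g l.
Proof.
  induction l; simpl; intros H; [lra|].
  assert (f a <= g a) by auto. assert (rsum f l <= rsum g l) by auto. lra.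
Qed.

Lemma rsum_nonneg {X} (f : X -> R) l : (forall a, In a l -> 0 <= f a) -> 0 <= rsum f l.
Proof.
  induction l; simpl; intros H; [lra|].
  assert (0 <= f a) by auto. assert (0 <= rsum f l) by auto. lra.
Qed.

Lemma rsum_app {X} (f : X -> R) l1 l2 : rsum f (l1 ++ l2) = rsum f l1 + rsum f l2.
Proof. induction l1; simpl; [lra|]. rewrite IHl1; lra. Qed.

Lemma rsum_const {X} (c : R) (l : list X) : rsum (fun _ => c) l = INR (length l) * c.
Proof.
  induction l; simpl length; [simpl; lra|]. rewrite S_INR. simpl rsum. rewrite IHl. lra.
Qed.

Lemma rsum_plus {X} (f g : X -> R) l : rsum (fun a => f a + g a) l = rsum f l + rsum g l.
Proof. induction l; simpl; [lra|]. rewrite IHl; lra. Qed.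

Lemma rsum_scal {X} (c : R) (f : X -> R) l : rsum (fun a => c * f a) l = c * rsum f l.
Proof. induction l; simpl; [lra|]. rewrite IHl; lra. Qed.

Definition ilist (u v : R) : list nat :=
  seq (Z.to_nat (up (u - 1))) (Z.to_nat (up v) - Z.to_nat (up (u - 1))).

Lemma INR_Z2Nat_ge z : IZR z <= INR (Z.to_nat z).
Proof.
  destruct (Z_le_gt_dec 0 z) as [H|H].
  - rewrite INR_IZR_INZ, Z2Nat.id; auto; lra.
  - apply Rle_trans with 0; [|apply pos_INR]. apply IZR_le. lia.
Qed.

Lemma ilist_in u v (a : nat) : u <= INR a <= v -> In a (ilist u v).
Proof.
  intros [H1 H2]. unfold ilist. apply in_seq.
  destruct (archimed (u - 1)) as [A1 A2]. destruct (archimed v) as [B1 B2].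
  assert (Hlo : (up (u - 1) <= Z.of_nat a)%Z).
  { destruct (Z_le_gt_dec (up (u - 1)) (Z.of_nat a)) as [h|h]; auto.
    assert (h' : (Z.of_nat a + 1 <= up (u - 1))%Z) by lia.
    apply IZR_le in h'. rewrite plus_IZR, <- INR_IZR_INZ in h'. lra. }
  assert (Hhi : (Z.of_nat a < up v)%Z).
  { apply lt_IZR. rewrite <- INR_IZR_INZ. lra. }
  lia.
Qed.

Lemma ilist_len u v : u <= v -> INR (length (ilist u v)) <= v - u + 2.
Proof.
  intros Huv. unfold ilist. rewrite length_seq.
  destruct (archimed (u - 1)) as [A1 A2]. destruct (archimed v) as [B1 B2].
  set (lo := Z.to_nat (up (u - 1))). set (hi := Z.to_nat (up v)).
  destruct (Nat.le_gt_cases hi lo) as [H|H].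
  - replace (hi - lo)%nat with 0%nat by lia. simpl; lra.
  - rewrite minus_INR by lia.
    assert (INR hi = IZR (up v)).
    { unfold hi. rewrite INR_IZR_INZ, Z2Nat.id; auto. lia. }
    assert (IZR (up (u - 1)) <= INR lo) by apply INR_Z2Nat_ge.
    lra.
Qed.

Fixpoint prodl (L : nat -> list nat) (n : nat) : list (list nat) :=
  match n with
  | O => nil :: nil
  | S n' => flat_map (fun a => map (cons a) (prodl (fun i => L (S i)) n')) (L O)
  end.

Lemma prodl_in n : forall L b, length b = n -> (forall i, (i < n)%nat -> In (nth i b 0%nat) (L i)) ->
  In b (prodl L n).
Proof.
  induction n; intros L b Hl Hi.
  - destruct b; simpl in *; [auto|discriminate].
  - destruct b as [|a b]; simpl in Hl; [discriminate|].
    simpl. apply in_flat_map. exists a. split.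
    + apply (Hi 0%nat); lia.
    + apply in_map. apply IHn; [lia|]. intros i Hi'. apply (Hi (S i)). lia.
Qed.

Lemma flat_map_len_const {A B} (f : A -> list B) l m :
  (forall a, length (f a) = m) -> length (flat_map f l) = (length l * m)%nat.
Proof.
  intros H; induction l; simpl; auto. rewrite length_app, H, IHl. lia.
Qed.

Lemma prodl_len n : forall L (m : R), 0 <= m -> (forall i, (i < n)%nat -> INR (length (L i)) <= m) ->
  INR (length (prodl L n)) <= m ^ n.
Proof.
  induction n; intros L m Hm Hi.
  - simpl; lra.
  - simpl prodl. rewrite (flat_map_len_const _ _ (length (prodl (fun i => L (S i)) n))).
    + rewrite mult_INR. simpl pow.
      apply Rmult_le_compat; try apply pos_INR.
      * apply (Hi 0%nat); lia.
      * apply IHn; auto. intros i Hi'; apply (Hi (S i)); lia.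
    + intros a; apply length_map.
Qed.

Lemma covered_box n (u v : nat -> R) (w : R) :
  (forall i, (i < n)%nat -> u i <= v i /\ v i - u i <= w) ->
  covered (fun b => length b = n /\ forall i, (i < n)%nat -> u i <= INR (nth i b 0%nat) <= v i)
    ((w + 2) ^ n).
Proof.
  intros H. exists (prodl (fun i => ilist (u i) (v i)) n). split.
  - intros b [Hl Hb]. apply prodl_in; auto. intros i Hi. apply ilist_in; auto.
  - destruct n.
    + simpl; lra.
    + apply prodl_len.
      * destruct (H 0%nat) as [h1 h2]; [lia|]. lra.
      * intros i Hi. destruct (H i Hi) as [h1 h2].
        apply Rle_trans with (v i - u i + 2); [apply ilist_len; auto| lra].
Qed.

Lemma Rpower_pos x y : 0 < Rpower x y.
Proof. unfold Rpower; apply exp_pos. Qed.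

Lemma Rpower2_nat n : Rpower 2 (INR n) = 2 ^ n.
Proof. apply Rpower_pow; lra. Qed.

Lemma pow_inv2 k : (/2) ^ k = Rpower 2 (- INR k).
Proof. rewrite Rpower_Ropp, Rpower2_nat, pow_inv. reflexivity. Qed.

Lemma Rpower_one_base y : Rpower 1 y = 1.
Proof. unfold Rpower. rewrite ln_1, Rmult_0_r, exp_0. reflexivity. Qed.

Lemma Rpower_le_self r t : 0 < r <= 1 -> 1 <= t -> Rpower r t <= r.
Proof.
  intros Hr Ht. replace t with (1 + (t - 1)) by ring.
  rewrite Rpower_plus, Rpower_1 by lra.
  assert (Rpower r (t - 1) <= Rpower 1 (t - 1)) by (apply Rle_Rpower_l; lra).
  rewrite Rpower_one_base in H.
  pose proof (Rpower_pos r (t-1)).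
  nra.
Qed.

Lemma Rpower2_le_inv a b : Rpower 2 a <= Rpower 2 b -> a <= b.
Proof.
  intros H. destruct (Rle_lt_dec a b) as [h|h]; auto.
  assert (Rpower 2 b < Rpower 2 a) by (apply Rpower_lt; lra). lra.
Qed.

Lemma Rpower2_le a b : a <= b -> Rpower 2 a <= Rpower 2 b.
Proof. intros; apply Rle_Rpower; lra. Qed.

Lemma div_ge a b c : 0 < c -> a * c <= b -> a <= b / c.
Proof.
  intros Hc H. apply Rmult_le_reg_r with c; auto.
  unfold Rdiv. rewrite Rmult_assoc, Rinv_l by lra. lra.
Qed.

Lemma div_le a b c : 0 < c -> a <= b * c -> a / c <= b.
Proof.
  intros Hc H. apply Rmult_le_reg_r with c; auto.
  unfold Rdiv. rewrite Rmult_assoc, Rinv_l by lra. lra.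
Qed.

Lemma half_pow_pos k : 0 < (/2) ^ k.
Proof. apply pow_lt; lra. Qed.

Definition gp (k : nat) (z : list nat) : pt := fun i => INR (nth i z 0%nat) * (/2) ^ k.

Definition zof (d k : nat) (y : pt) : list nat :=
  map (fun i => Z.to_nat (up (y i / (/2) ^ k - /2))) (seq 0 d).

Lemma nth_map_seq {A} (f : nat -> A) n i dflt : (i < n)%nat -> nth i (map f (seq 0 n)) dflt = f i.
Proof.
  intros H. rewrite nth_indep with (d' := f 0%nat) by (rewrite length_map, length_seq; auto).
  rewrite map_nth, seq_nth by auto. reflexivity.
Qed.

Lemma zof_len d k y : length (zof d k y) = d.
Proof. unfold zof; rewrite length_map, length_seq; auto. Qed.

Lemma zof_spec d k y i : (i < d)%nat -> 0 <= y i ->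
  y i - (/2) ^ k / 2 <= INR (nth i (zof d k y) 0%nat) * (/2) ^ k <= y i + (/2) ^ k / 2.
Proof.
  intros Hi Hy. unfold zof.
  rewrite nth_map_seq by auto.
  set (h := (/2) ^ k). assert (Hh : 0 < h) by apply half_pow_pos.
  set (t := y i / h - /2).
  destruct (archimed t) as [A1 A2].
  assert (Hz : (0 <= up t)%Z).
  { assert (-1 < IZR (up t)).
    { assert (0 <= y i / h) by (apply Rle_mult_inv_pos; lra).
      assert (t >= - / 2) by (unfold t; lra). lra. }
    apply le_IZR. assert (IZR (-1) < IZR (up t)) by (simpl; lra).
    apply lt_IZR in H0. apply IZR_le. lia. }
  rewrite INR_IZR_INZ, Z2Nat.id by auto.
  assert (E : y i = (t + /2) * h) by (unfold t; field; lra).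
  rewrite E. split; nra.
Qed.

Lemma abs_le_e a b : Rabs a <= b -> - b <= a <= b.
Proof. unfold Rabs; destruct (Rcase_abs a); lra. Qed.

Lemma abs_le_i a b : - b <= a <= b -> Rabs a <= b.
Proof. unfold Rabs; destruct (Rcase_abs a); lra. Qed.

Lemma T_r d x r k p : T d x r k p -> 0 < r p /\ (/2) ^ k / 2 < r p <= (/2) ^ k.
Proof.
  intros [_ [H1 H2]]. simpl in H1. pose proof (half_pow_pos k). split; [nra|]. split; lra.
Qed.

Lemma Rpower_r_delta_le (rp K delta : R) (k : nat) :
  0 < rp <= (/2) ^ k -> 1 < delta -> Rpower rp delta <= Rpower 2 (- (INR k * delta)).
Proof.
  intros Hr Hd. apply Rle_trans with (Rpower ((/2) ^ k) delta).
  - apply Rle_Rpower_l; lra.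
  - rewrite pow_inv2, Rpower_mult. right; f_equal; ring.
Qed.

Lemma ratio_eq (j k : nat) delta :
  Rpower 2 (- (INR k * delta)) / (/2) ^ j = Rpower 2 (INR j - INR k * delta).
Proof.
  rewrite pow_inv2, (Rpower_Ropp 2 (INR j)). unfold Rdiv. rewrite Rinv_inv.
  replace (INR j - INR k * delta) with (- (INR k * delta) + INR j) by ring.
  rewrite Rpower_plus. reflexivity.
Qed.

Lemma B_cover d (x : nat -> pt) (r : nat -> R) (c : nat -> nat -> nat) k j delta i z :
  1 < delta ->
  (forall n m, T d x r k n -> T d x r k m -> n <> m -> c k n = c k m ->
         ~ (exists y, ball d (x n) (r n) y /\ ball d (x m) (r m) y)) ->
  covered (fun b => length b = d /\ exists p y, T d x r k p /\ c k p = i /\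
              ball d (x p) (r p) (gp k z) /\ cube d j b y /\ ball d (x p) (Rpower (r p) delta) y)
   ((2 * Rpower 2 (INR j - INR k * delta) + 3) ^ d).
Proof.
  intros Hd Hdisj.
  destruct (classic (exists p, T d x r k p /\ c k p = i /\ ball d (x p) (r p) (gp k z)))
    as [[p0 [Tp0 [cp0 bp0]]] | Hno].
  2:{ apply covered_empty.
      - intros b [_ [p [y [Tp [cp [bp _]]]]]]. apply Hno; exists p; auto.
      - apply pow_le. pose proof (Rpower_pos 2 (INR j - INR k * delta)). lra. }
  set (R0 := Rpower 2 (- (INR k * delta))).
  set (hj := (/2) ^ j).
  assert (Hhj : 0 < hj) by apply half_pow_pos.
  assert (HR0 : 0 < R0) by apply Rpower_pos.
  replace (2 * Rpower 2 (INR j - INR k * delta) + 3)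
    with ((2 * Rpower 2 (INR j - INR k * delta) + 1) + 2) by ring.
  apply covered_mono with
    (B := fun b => length b = d /\ forall q, (q < d)%nat ->
        (x p0 q - R0) / hj - 1 <= INR (nth q b 0%nat) <= (x p0 q + R0) / hj)
    (M := (2 * Rpower 2 (INR j - INR k * delta) + 1 + 2) ^ d).
  3:{ apply covered_box. intros q Hq.
      assert (E : (x p0 q + R0) / hj - ((x p0 q - R0) / hj - 1) = 2 * (R0 / hj) + 1)
        by (field; lra).
      assert (R0 / hj = Rpower 2 (INR j - INR k * delta)) by (unfold R0, hj; apply ratio_eq).
      assert (0 < R0 / hj) by (apply Rdiv_lt_0_compat; auto).
      lra. }
  2:{ lra. }
  intros b [Hl [p [y [Tp [cp [bp [cb by_]]]]]]].
  assert (p = p0).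
  { destruct (Nat.eq_dec p p0) as [e|ne]; auto. exfalso.
    apply (Hdisj p p0 Tp Tp0 ne); [congruence|]. exists (gp k z); auto. }
  subst p. split; auto. intros q Hq.
  destruct (T_r _ _ _ _ _ Tp0) as [Hr [Hr1 Hr2]].
  assert (Rpower (r p0) delta <= R0) by (apply Rpower_r_delta_le; auto; lra).
  specialize (by_ q Hq). apply abs_le_e in by_.
  specialize (cb q Hq). fold hj in cb.
  split.
  - assert ((x p0 q - R0) / hj <= INR (nth q b 0%nat) + 1); [|lra].
    apply div_le; auto. lra.
  - apply div_ge; auto. lra.
Qed.

Lemma ratio2 (g k : nat) : (/2) ^ g / (/2) ^ k = Rpower 2 (INR k - INR g).
Proof.
  rewrite !pow_inv2, (Rpower_Ropp 2 (INR k)). unfold Rdiv. rewrite Rinv_inv.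
  replace (INR k - INR g) with (- INR g + INR k) by ring.
  rewrite Rpower_plus. reflexivity.
Qed.

Lemma A_cover d (x : nat -> pt) (r : nat -> R) (N : nat -> nat) (c : nat -> nat -> nat)
    k j delta gU (aU : list nat) :
  is_system d x r -> 1 < delta ->
  (forall n, T d x r k n -> (c k n < N k)%nat) ->
  (forall n m, T d x r k n -> T d x r k m -> n <> m -> c k n = c k m ->
         ~ (exists y, ball d (x n) (r n) y /\ ball d (x m) (r m) y)) ->
  covered (fun b => length b = d /\ (forall y, cube d j b y -> cube d gU aU y) /\
             exists y, cube d j b y /\ exists p, T d x r k p /\ ball d (x p) (Rpower (r p) delta) y)
    (INR (N k) * ((Rpower 2 (INR k - INR gU) + 6) ^ d *
       (2 * Rpower 2 (INR j - INR k * delta) + 3) ^ d)).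
Proof.
  intros Hsys Hd HcN Hdisj.
  set (H := (/2) ^ gU). set (h := (/2) ^ k).
  assert (HH : 0 < H) by apply half_pow_pos. assert (Hh : 0 < h) by apply half_pow_pos.
  set (uZ := fun q => (INR (nth q aU 0%nat) * H - 2 * h) / h).
  set (vZ := fun q => ((INR (nth q aU 0%nat) + 1) * H + 2 * h) / h).
  set (Zl := prodl (fun q => ilist (uZ q) (vZ q)) d).
  assert (HHh : H / h = Rpower 2 (INR k - INR gU)) by apply ratio2.
  assert (HHh0 : 0 < H / h) by (apply Rdiv_lt_0_compat; auto).
  assert (HZl : INR (length Zl) <= (Rpower 2 (INR k - INR gU) + 6) ^ d).
  { apply prodl_len; [lra|]. intros q Hq.
    assert (E : vZ q - uZ q = H / h + 4) by (unfold vZ, uZ; field; lra).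
    rewrite <- HHh. eapply Rle_trans; [apply ilist_len|]; lra. }
  set (Mb := (2 * Rpower 2 (INR j - INR k * delta) + 3) ^ d).
  assert (HMb : 0 <= Mb).
  { apply pow_le. pose proof (Rpower_pos 2 (INR j - INR k * delta)). lra. }
  apply covered_mono with
    (B := fun b => exists i, In i (seq 0 (N k)) /\
           (fun i b => exists z, In z Zl /\
              (length b = d /\ exists p y, T d x r k p /\ c k p = i /\
              ball d (x p) (r p) (gp k z) /\ cube d j b y /\ ball d (x p) (Rpower (r p) delta) y)) i b)
    (M := rsum (fun i => rsum (fun z => Mb) Zl) (seq 0 (N k))).
  3:{ apply (covered_union _ (fun i b => exists z, In z Zl /\
              (length b = d /\ exists p y, T d x r k p /\ c k p = i /\
              ball d (x p) (r p) (gp k z) /\ cube d j b y /\ ball d (x p) (Rpower (r p) delta) y))); auto.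
      intros i _.
      apply (covered_union _ (fun z b => length b = d /\ exists p y, T d x r k p /\ c k p = i /\
              ball d (x p) (r p) (gp k z) /\ cube d j b y /\ ball d (x p) (Rpower (r p) delta) y)); auto.
      intros z _. apply B_cover; auto. }
  2:{ rewrite rsum_const, rsum_const, length_seq.
      apply Rmult_le_compat_l; [apply pos_INR|]. apply Rmult_le_compat_r; auto. }
  intros b [Hl [HU [y [cy [p [Tp bp]]]]]].
  exists (c k p). split; [apply in_seq; simpl; apply HcN in Tp; lia|].
  exists (zof d k (x p)). split.
  2:{ split; auto. exists p, y. split; auto. split; auto. split; auto.
      intros q Hq. unfold gp. apply abs_le_i.
      destruct Hsys as [Hx _].
      pose proof (zof_spec d k (x p) q Hq (proj1 (Hx p q Hq))).
      destruct (T_r _ _ _ _ _ Tp) as [_ [Hr1 _]]. fold h in H0, Hr1. fold h. lra. }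
  apply prodl_in; [apply zof_len|]. intros q Hq. apply ilist_in.
  destruct Hsys as [Hx _].
  pose proof (zof_spec d k (x p) q Hq (proj1 (Hx p q Hq))) as Hz. fold h in Hz.
  destruct (T_r _ _ _ _ _ Tp) as [Hr0 [Hr1 Hr2]]. fold h in Hr1, Hr2.
  assert (h <= 1) by (unfold h; rewrite <- (pow1 k); apply pow_incr; lra).
  assert (Rpower (r p) delta <= r p) by (apply Rpower_le_self; lra).
  specialize (bp q Hq). apply abs_le_e in bp.
  specialize (HU y cy q Hq). fold H in HU.
  unfold uZ, vZ. split.
  - apply div_le; auto. lra.
  - apply div_ge; auto. lra.
Qed.

Lemma sum_f_R0_rsum F n : sum_f_R0 F n = rsum F (seq 0 (S n)).
Proof.
  induction n.
  - simpl. lra.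
  - rewrite seq_S, rsum_app. simpl sum_f_R0. rewrite IHn. simpl. lra.
Qed.

Lemma rsum_sub F a m n : (forall k, 0 <= F k) -> (a + m <= S n)%nat ->
  rsum F (seq a m) <= rsum F (seq 0 (S n)).
Proof.
  intros HF Hle.
  replace (S n) with (a + (m + (S n - a - m)))%nat by lia.
  rewrite seq_app, seq_app, !rsum_app.
  assert (0 <= rsum F (seq 0 a)) by (apply rsum_nonneg; auto).
  assert (0 <= rsum F (seq (0 + a + m) (S n - a - m))) by (apply rsum_nonneg; auto).
  simpl plus in *. lra.
Qed.

Lemma geom_bound q n : 2 <= q -> rsum (fun k => q ^ k) (seq 0 (S n)) <= 2 * q ^ n.
Proof.
  intros Hq. induction n.
  - simpl; lra.
  - rewrite seq_S, rsum_app. simpl rsum at 2. simpl (0 + S n)%nat.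
    assert (0 <= q ^ n) by (apply pow_le; lra).
    simpl pow. nra.
Qed.

Lemma N_mono (N : nat -> nat) : (forall j, (N j <= N (S j))%nat) ->
  forall k g, (k <= g)%nat -> (N k <= N g)%nat.
Proof.
  intros H k g Hkg. induction Hkg; auto. specialize (H m). lia.
Qed.

Lemma Rpower_2_nat_mul d k : Rpower 2 (INR d * INR k) = (2 ^ d) ^ k.
Proof. rewrite <- mult_INR, Rpower2_nat, pow_mult. reflexivity. Qed.

Lemma Rpower_pow_R x n : 0 < x -> x ^ n = Rpower x (INR n).
Proof. intros; rewrite Rpower_pow; auto. Qed.

Lemma Rp2 a b : Rpower 2 a * Rpower 2 b = Rpower 2 (a + b).
Proof. rewrite Rpower_plus; auto. Qed.

Lemma Mk_bound (d k j gU : nat) (delta psik : R) (Nk : nat) :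
  (gU <= k)%nat -> 0 < delta -> INR Nk = Rpower 2 (INR d * INR k * psik) ->
  INR Nk * ((Rpower 2 (INR k - INR gU) + 6) ^ d * (2 * Rpower 2 (INR j - INR k * delta) + 3) ^ d)
  <= 35 ^ d * Rpower 2 (INR d * (INR j - INR gU)) *
     ((if Rle_dec (INR k) (INR j / delta)
       then Rpower 2 (- (INR d * INR k * (delta - 1 - psik))) else 0)
      + INR Nk * (2 ^ d) ^ k * Rpower 2 (- (INR d * INR j))).
Proof.
  intros Hk Hd HN.
  set (X1 := Rpower 2 (INR k - INR gU)).
  assert (HX1 : 1 <= X1).
  { unfold X1. rewrite <- (Rpower_O 2) by lra. apply Rpower2_le.
    apply le_INR in Hk. lra. }
  assert (E1 : (Rpower 2 (INR k - INR gU) + 6) ^ d <= 7 ^ d * Rpower 2 (INR d * (INR k - INR gU))).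
  { fold X1. apply Rle_trans with ((7 * X1) ^ d).
    - apply pow_incr; lra.
    - rewrite Rpow_mult_distr. right. f_equal. unfold X1.
      rewrite Rpower_pow_R, Rpower_mult by apply Rpower_pos. f_equal; ring. }
  assert (P7 : 0 <= 7 ^ d) by (apply pow_le; lra).
  assert (P5 : 0 <= 5 ^ d) by (apply pow_le; lra).
  assert (HNk : 0 <= INR Nk) by apply pos_INR.
  assert (E35 : 35 ^ d = 7 ^ d * 5 ^ d) by (rewrite <- Rpow_mult_distr; f_equal; ring).
  set (X2 := Rpower 2 (INR j - INR k * delta)).
  assert (HX2 : 0 < X2) by apply Rpower_pos.
  assert (Hpos2 : 0 <= (2 * X2 + 3) ^ d) by (apply pow_le; lra).
  assert (Hq : 0 <= (Rpower 2 (INR k - INR gU) + 6) ^ d) by (apply pow_le; pose proof (Rpower_pos 2 (INR k - INR gU)); lra).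
  destruct (Rle_dec (INR k) (INR j / delta)) as [Hc|Hc].
  - assert (Hkd : INR k * delta <= INR j).
    { apply Rmult_le_compat_r with (r := delta) in Hc; [|lra].
      unfold Rdiv in Hc. rewrite Rmult_assoc, Rinv_l, Rmult_1_r in Hc by lra. auto. }
    assert (HX2' : 1 <= X2).
    { unfold X2. rewrite <- (Rpower_O 2) by lra. apply Rpower2_le. lra. }
    assert (E2 : (2 * X2 + 3) ^ d <= 5 ^ d * Rpower 2 (INR d * (INR j - INR k * delta))).
    { apply Rle_trans with ((5 * X2) ^ d).
      - apply pow_incr; lra.
      - rewrite Rpow_mult_distr. right. f_equal. unfold X2.
        rewrite Rpower_pow_R, Rpower_mult by apply Rpower_pos. f_equal; ring. }
    assert (Hextra : 0 <= INR Nk * (2 ^ d) ^ k * Rpower 2 (- (INR d * INR j))).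
    { pose proof (Rpower_pos 2 (- (INR d * INR j))). assert (0 <= (2^d)^k) by (apply pow_le, pow_le; lra).
      apply Rmult_le_pos; [apply Rmult_le_pos|]; lra. }
    assert (Hmain : INR Nk * ((Rpower 2 (INR k - INR gU) + 6) ^ d * (2 * X2 + 3) ^ d)
       <= 35 ^ d * Rpower 2 (INR d * (INR j - INR gU)) * Rpower 2 (- (INR d * INR k * (delta - 1 - psik)))).
    { apply Rle_trans with (INR Nk * ((7 ^ d * Rpower 2 (INR d * (INR k - INR gU))) *
                                       (5 ^ d * Rpower 2 (INR d * (INR j - INR k * delta))))).
      - apply Rmult_le_compat_l; auto. apply Rmult_le_compat; auto.
      - right. rewrite HN, E35.
        replace (Rpower 2 (INR d * INR k * psik) *
          (7 ^ d * Rpower 2 (INR d * (INR k - INR gU)) * (5 ^ d * Rpower 2 (INR d * (INR j - INR k * delta)))))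
          with (7 ^ d * 5 ^ d * (Rpower 2 (INR d * INR k * psik) * Rpower 2 (INR d * (INR k - INR gU)) * Rpower 2 (INR d * (INR j - INR k * delta)))) by ring.
        rewrite !Rp2. rewrite (Rmult_assoc (7 ^ d * 5 ^ d) (Rpower 2 _)), Rp2. f_equal. f_equal. ring. }
    assert (0 <= 35 ^ d * Rpower 2 (INR d * (INR j - INR gU))).
    { apply Rmult_le_pos; [apply pow_le; lra| left; apply Rpower_pos]. }
    rewrite Rmult_plus_distr_l.
    pose proof (Rmult_le_pos _ _ H Hextra). fold X1 in Hmain. lra.
  - assert (HX2' : X2 <= 1).
    { unfold X2. rewrite <- (Rpower_O 2) by lra. apply Rpower2_le.
      assert (INR j / delta < INR k) by lra.
      apply Rmult_lt_compat_r with (r := delta) in H; [|lra].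
      unfold Rdiv in H. rewrite Rmult_assoc, Rinv_l, Rmult_1_r in H by lra. lra. }
    assert (E2 : (2 * X2 + 3) ^ d <= 5 ^ d) by (apply pow_incr; lra).
    apply Rle_trans with (INR Nk * ((7 ^ d * Rpower 2 (INR d * (INR k - INR gU))) * 5 ^ d)).
    + apply Rmult_le_compat_l; auto. apply Rmult_le_compat; auto.
    + right. rewrite Rplus_0_l, E35, <- Rpower_2_nat_mul.
      replace (35 ^ d) with (7 ^ d * 5 ^ d) by (rewrite E35; auto).
      replace (7 ^ d * 5 ^ d * Rpower 2 (INR d * (INR j - INR gU)) *
         (INR Nk * Rpower 2 (INR d * INR k) * Rpower 2 (- (INR d * INR j))))
        with (INR Nk * (7 ^ d * 5 ^ d) * (Rpower 2 (INR d * (INR j - INR gU)) * Rpower 2 (INR d * INR k) * Rpower 2 (- (INR d * INR j)))) by ring.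
      rewrite !Rp2.
      replace (INR d * (INR j - INR gU) + INR d * INR k + - (INR d * INR j)) with (INR d * (INR k - INR gU)) by ring.
      ring.
Qed.

Lemma rsum_sub' F a m n : (forall k, 0 <= F k) -> ((a + m <= S n)%nat \/ m = 0%nat) ->
  rsum F (seq a m) <= rsum F (seq 0 (S n)).
Proof.
  intros HF [H|H].
  - apply rsum_sub; auto.
  - subst m. change (rsum F (seq a 0)) with 0. apply rsum_nonneg; auto.
Qed.

Theorem mainTheorem3 :
  forall d : nat, (1 <= d)%nat ->
  exists C : R,
  forall (x : nat -> pt) (r : nat -> R) (N : nat -> nat) (psi phi : R -> R),
    is_system d x r -> cond_C1 d x r N -> psi_assoc d N psi -> inPhi phi ->
  forall (delta : R) (gU : nat) (aU : list nat) (j : nat),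
    1 < delta -> (1 <= gU)%nat -> is_dyadic d gU aU ->
    delta * INR gU <= INR j ->
    card_le (Qtilde d x r N phi gU aU j delta)
      (C * Rpower 2 (INR d * (INR j - INR gU)) *
         (Rpower 2 (- (INR d * INR j * phi ((/2) ^ j))) +
          sum_f_R0 (fun k =>
            if Nat.leb gU k then
              if Rle_dec (INR k) (INR j / delta) then
                Rpower 2 (- (INR d * INR k * (delta - 1 - psi ((/2) ^ k))))
              else 0
            else 0) j)).
Proof.
  intros d Hd. exists (2 * 35 ^ d).
  intros x r N psi phi Hsys HC1 Hpsi Hphi delta gU aU j Hdel HgU HdyU Hj.
  destruct HC1 as [HN1 [HNmono [_ [c Hc]]]].
  destruct Hpsi as [_ [_ [_ HNpsi]]].
  destruct Hphi as [Hphi0 _].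
  apply covered_card.
  set (F := fun k =>
            if Nat.leb gU k then
              if Rle_dec (INR k) (INR j / delta) then
                Rpower 2 (- (INR d * INR k * (delta - 1 - psi ((/2) ^ k))))
              else 0
            else 0).
  set (A := Rpower 2 (- (INR d * INR j * phi ((/2) ^ j)))).
  set (P := Rpower 2 (INR d * (INR j - INR gU))).
  assert (HF : forall k, 0 <= F k).
  { intros k. unfold F. destruct (Nat.leb gU k); [|lra].
    destruct (Rle_dec _ _); [left; apply Rpower_pos| lra]. }
  assert (HS : 0 <= sum_f_R0 F j) by (rewrite sum_f_R0_rsum; apply rsum_nonneg; auto).
  assert (HA : 0 < A) by apply Rpower_pos.
  assert (HP : 0 < P) by apply Rpower_pos.
  assert (H35 : 0 < 35 ^ d) by (apply pow_lt; lra).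
  destruct (classic (exists g, is_gamma d N phi j g)) as [[g Hg] | Hno].
  2:{ apply covered_empty.
      - intros b [_ [_ [y [_ [k [[g [Hg _]] _]]]]]]. apply Hno; exists g; auto.
      - apply Rmult_le_pos; [apply Rmult_le_pos|]; lra. }
  assert (Hgj : (g <= j)%nat).
  { destruct Hg as [Hgs _]. unfold gamma_set in Hgs.
    assert (HA1 : A <= 1).
    { unfold A. rewrite <- (Rpower_O 2) by lra. apply Rpower2_le.
      assert (0 <= phi ((/2) ^ j)) by (apply Hphi0; left; apply half_pow_pos).
      assert (0 <= INR d * INR j) by (apply Rmult_le_pos; apply pos_INR). nra. }
    assert (1 <= INR (N g)) by (apply (le_INR 1); auto).
    pose proof (Rpower_pos 2 (INR d * INR g)). pose proof (Rpower_pos 2 (INR d * INR j)).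
    fold A in Hgs.
    assert (Rpower 2 (INR d * INR g) <= Rpower 2 (INR d * INR j)) by nra.
    apply Rpower2_le_inv in H2.
    assert (1 <= INR d) by (apply (le_INR 1); auto).
    apply INR_le. nra. }
  set (Mk := fun k => INR (N k) * ((Rpower 2 (INR k - INR gU) + 6) ^ d *
       (2 * Rpower 2 (INR j - INR k * delta) + 3) ^ d)).
  apply covered_mono with
    (B := fun b => exists k, In k (seq gU (S g - gU)) /\
       (fun k b => length b = d /\ (forall y, cube d j b y -> cube d gU aU y) /\
             exists y, cube d j b y /\ exists p, T d x r k p /\ ball d (x p) (Rpower (r p) delta) y) k b)
    (M := rsum Mk (seq gU (S g - gU))).
  3:{ apply (covered_union _ (fun k b => length b = d /\ (forall y, cube d j b y -> cube d gU aU y) /\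
             exists y, cube d j b y /\ exists p, T d x r k p /\ ball d (x p) (Rpower (r p) delta) y)); auto.
      intros k Hk. apply in_seq in Hk.
      destruct (Hc k) as [Hc1 Hc2]; [lia|].
      apply (A_cover d x r N c); auto. }
  - intros b [[Hl _] [HU [y [cy [k [[g' [Hg' Hk]] [p [Tp bp]]]]]]]].
    assert (g' = g).
    { destruct Hg as [Hg1 Hg2]. destruct Hg' as [Hg1' Hg2'].
      apply Hg2 in Hg1'. apply Hg2' in Hg1. lia. }
    subst g'. exists k. split; [apply in_seq; lia|].
    split; auto. split; auto. exists y. split; auto. exists p; auto.
  -
    set (e := fun k => INR (N k) * (2 ^ d) ^ k * Rpower 2 (- (INR d * INR j))).
    apply Rle_trans with (rsum (fun k => 35 ^ d * P * (F k + e k)) (seq gU (S g - gU))).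
    { apply rsum_le. intros k Hk. apply in_seq in Hk.
      unfold Mk, F, e. replace (Nat.leb gU k) with true by (symmetry; apply Nat.leb_le; lia).
      apply Mk_bound; [lia|lra|]. rewrite HNpsi. f_equal. }
    rewrite rsum_scal, rsum_plus.
    assert (Hsf : rsum F (seq gU (S g - gU)) <= sum_f_R0 F j).
    { assert (HgUj : (gU <= j)%nat).
      { apply INR_le. pose proof (pos_INR gU). nra. }
      rewrite sum_f_R0_rsum. apply rsum_sub; auto. lia. }
    assert (He : rsum e (seq gU (S g - gU)) <= 2 * A).
    { apply Rle_trans with (rsum (fun k => INR (N g) * Rpower 2 (- (INR d * INR j)) * (2 ^ d) ^ k)
                               (seq gU (S g - gU))).
      - apply rsum_le. intros k Hk. apply in_seq in Hk. unfold e.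
        assert (INR (N k) <= INR (N g)) by (apply le_INR, N_mono; auto; lia).
        pose proof (Rpower_pos 2 (- (INR d * INR j))).
        assert (0 <= (2 ^ d) ^ k) by (apply pow_le, pow_le; lra).
        assert (0 <= INR (N k)) by apply pos_INR.
        replace (INR (N g) * Rpower 2 (- (INR d * INR j)) * (2 ^ d) ^ k)
          with (INR (N g) * (2 ^ d) ^ k * Rpower 2 (- (INR d * INR j))) by ring.
        apply Rmult_le_compat_r; [lra|]. apply Rmult_le_compat_r; lra.
      - rewrite rsum_scal.
        assert (Hgeo : rsum (fun k => (2 ^ d) ^ k) (seq gU (S g - gU)) <= 2 * (2 ^ d) ^ g).
        { apply Rle_trans with (rsum (fun k => (2 ^ d) ^ k) (seq 0 (S g))).
          - apply rsum_sub'; [intros; apply pow_le, pow_le; lra| lia].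
          - apply geom_bound. replace 2 with (2 ^ 1) at 1 by ring.
            apply Rle_pow; [lra| lia]. }
        destruct Hg as [Hgs _]. unfold gamma_set in Hgs. fold A in Hgs.
        rewrite Rpower_2_nat_mul in Hgs.
        assert (0 <= INR (N g) * Rpower 2 (- (INR d * INR j))).
        { apply Rmult_le_pos; [apply pos_INR| left; apply Rpower_pos]. }
        apply Rle_trans with (INR (N g) * Rpower 2 (- (INR d * INR j)) * (2 * (2 ^ d) ^ g)).
        + apply Rmult_le_compat_l; auto.
        + assert (Einv : Rpower 2 (- (INR d * INR j)) * Rpower 2 (INR d * INR j) = 1).
          { rewrite Rp2. replace (- (INR d * INR j) + INR d * INR j) with 0 by ring.
            apply Rpower_O; lra. }
          pose proof (Rpower_pos 2 (- (INR d * INR j))).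
          replace (INR (N g) * Rpower 2 (- (INR d * INR j)) * (2 * (2 ^ d) ^ g))
            with (2 * Rpower 2 (- (INR d * INR j)) * (INR (N g) * (2 ^ d) ^ g)) by ring.
          apply Rle_trans with (2 * Rpower 2 (- (INR d * INR j)) * (A * Rpower 2 (INR d * INR j))).
          * apply Rmult_le_compat_l; lra.
          * right. replace (2 * Rpower 2 (- (INR d * INR j)) * (A * Rpower 2 (INR d * INR j)))
              with (2 * A * (Rpower 2 (- (INR d * INR j)) * Rpower 2 (INR d * INR j))) by ring.
            rewrite Einv. ring. }
    assert (0 <= 35 ^ d * P) by nra.
    apply Rle_trans with (35 ^ d * P * (sum_f_R0 F j + 2 * A)).
    + apply Rmult_le_compat_l; lra.
    + replace (2 * 35 ^ d * P * (A + sum_f_R0 F j)) with (35 ^ d * P * (2 * A + 2 * sum_f_R0 F j)) by ring.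
      apply Rmult_le_compat_l; lra.
Qed.
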